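(* For every integer $n\geq 6$, $AR(n,P_4\cup P_2)=n+1$, where $P_4\cup P_2$ is the vertex-disjoint union of a path with three edges and a single edge. *)

(* Defs.v *)
From mathcomp Require Import all_boot.
Set Implicit Arguments. Unset Strict Implicit. Unset Printing Implicit Defensive.

Definition Kedges (n : nat) : {set {set 'I_n}} := [set e : {set 'I_n} | #|e| == 2].

(* An edge-colouring of K_n is any map col : {set 'I_n} -> nat (only its
   values on edges matter).  Number of colours actually used on the edges: *)
Definition ncolors (n : nat) (col : {set 'I_n} -> nat) : nat :=
  size (undup [seq col e | e <- enum (Kedges n)]).

(* A rainbow copy of the graph H (on vertex set 'I_m, given by its edge list)
   in the colouring col: an injective placement f of the vertices of H into K_n
   such that the images of the edges of H receive pairwise distinct colours. *)
Definition rainbow_copy (n m : nat) (H : seq ('I_m * 'I_m))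
  (col : {set 'I_n} -> nat) : Prop :=
  exists f : 'I_m -> 'I_n,
    injective f /\ uniq [seq col [set f e.1; f e.2] | e <- H].

Definition forces_rainbow (n m : nat) (H : seq ('I_m * 'I_m)) (k : nat) : Prop :=
  forall col : {set 'I_n} -> nat, k <= ncolors col -> rainbow_copy H col.

Definition AR_is (n m : nat) (H : seq ('I_m * 'I_m)) (r : nat) : Prop :=
  forces_rainbow n H r /\ (forall k, k < r -> ~ forces_rainbow n H k).

Definition P4uP2 : seq ('I_6 * 'I_6) :=
  [:: (inord 0, inord 1); (inord 1, inord 2); (inord 2, inord 3);
      (inord 4, inord 5)].

(* Main.v *)
Require Import Defs.
From mathcomp Require Import all_boot.
From Stdlib Require Import Classical.

Definition pairs : seq (nat * nat) :=
  [:: (1, 2); (2, 4); (0, 2); (3, 4); (1, 5); (0, 5); (2, 5); (0, 3); (4, 5); (1, 3); (0, 4); (1, 4); (0, 1); (3, 5); (2, 3)].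
Definition eidx (i j : nat) : nat := index (minn i j, maxn i j) pairs.
Definition idxs (t : seq nat) : seq nat :=
  [:: eidx (nth 0 t 0) (nth 0 t 1); eidx (nth 0 t 1) (nth 0 t 2);
      eidx (nth 0 t 2) (nth 0 t 3); eidx (nth 0 t 4) (nth 0 t 5)].
Definition copies : seq (seq nat) :=
  [seq t <- permutations (iota 0 6) | (nth 0 t 0 < nth 0 t 3) && (nth 0 t 4 < nth 0 t 5)].
Definition mx (x : seq nat) := foldr maxn 0 x.
Definition table : seq (seq (seq nat)) :=
  [seq [seq x <- [seq idxs t | t <- copies] | mx x == l] | l <- iota 0 15].
Definition rb (s : seq nat) (x : seq nat) := uniq [seq nth 0 s i | i <- x].
Fixpoint lhas (s : seq nat) (l : seq (seq nat)) : bool :=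
  match l with [::] => false | x :: l' => if rb s x then true else lhas s l' end.
Fixpoint dfs (T : seq (seq (seq nat))) (k : nat) (p : seq nat) : bool :=
  match k with
  | 0 => false
  | k'.+1 =>
    all (fun c => let p' := rcons p c in
          if lhas p' (nth [::] T (size p)) then true
          else if size (undup p') + k' < 7 then true else dfs T k' p')
      [seq j <- iota 0 (size p).+1 | (j == size p) || (nth 0 p j == j)]
  end.
Definition check := dfs table 15 [::].

Lemma check_ok : check = true.
Proof. vm_compute. reflexivity. Qed.

Lemma lhas_sound s l : lhas s l -> exists2 x, x \in l & rb s x.
Proof.
elim: l => //= x l IH; case: ifP => [Hx _|_ /IH [y Hy Hr]].
  by exists x; rewrite ?inE ?eqxx.
by exists y; rewrite // inE Hy orbT.
Qed.

Lemma mx_ge x : all (fun y => y <= mx x) x.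
Proof.
elim: x => //= a x IH; rewrite leq_maxl /=.
apply/allP => y Hy; apply: leq_trans (leq_maxr a _); exact: (allP IH).
Qed.

Lemma table_mem i x : i < 15 -> x \in nth [::] table i ->
  (exists2 t, t \in copies & x = idxs t) /\ mx x = i.
Proof.
move=> Hi; rewrite /table (nth_map 0) ?size_iota // nth_iota // add0n.
rewrite mem_filter => /andP [/eqP <- /mapP [t Ht ->]]; split => //.
by exists t.
Qed.

Definition copies_ok :=
  all (fun t => (size t == 6) && uniq t && all (fun y => y < 6) t
                && all (fun y => y < 15) (idxs t)) copies.
Lemma copies_okP : copies_ok.
Proof. by vm_compute. Qed.

Lemma rb_cat p q x : all (fun y => y < size p) x -> rb p x -> rb (p ++ q) x.
Proof.
move=> Hx; rewrite /rb; congr (is_true (uniq _)).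
apply/eq_in_map => y Hy; rewrite nth_cat (allP Hx y Hy) //.
Qed.

Lemma size_undup_cat (p q : seq nat) :
  size (undup (p ++ q)) <= size (undup p) + size q.
Proof.
rewrite undup_cat size_cat leq_add //.
  by rewrite size_filter count_size.
exact: size_undup.
Qed.

Definition okv (r : seq nat) (i : nat) :=
  let v := nth 0 r i in (v == i) || ((v < i) && (nth 0 r v == v)).

Definition Good (r : seq nat) :=
  (exists2 t, t \in copies & rb r (idxs t)) \/ size (undup r) < 7.

Lemma dfs_sound k : forall p q, dfs table k p -> size q = k -> size p + k = 15 ->
  (forall i, size p <= i < 15 -> okv (p ++ q) i) -> Good (p ++ q).
Proof.
elim: k => [//|k IH] p [//|c q] Hd /= [Hq] Hs Hok.
have Hc : c \in [seq j <- iota 0 (size p).+1 | (j == size p) || (nth 0 p j == j)].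
  have := Hok (size p); rewrite leqnn -Hs -addSnnS leq_addr => /(_ isT).
  rewrite /okv nth_cat ltnn subnn => Hv.
  rewrite mem_filter mem_iota add0n.
  move: Hv => /= /orP [/eqP -> | /andP [Hlt]]; first by rewrite eqxx ltnSn.
  by rewrite nth_cat Hlt => ->; rewrite orbT ltnS ltnW.
have := allP Hd c Hc; rewrite -cat_rcons /=.
case: ifP => [Hl _ | _].
  have [x Hx Hr] := @lhas_sound _ _ Hl.
  have Hsp : size p < 15 by rewrite -Hs addnS ltnS leq_addr.
  have [[t Ht Hxt] Hmx] := @table_mem _ _ Hsp Hx.
  left; exists t => //; rewrite -Hxt; apply: rb_cat => //.
  apply/allP => y Hy; rewrite size_rcons ltnS -Hmx; exact: (allP (mx_ge x) y Hy).
case: ifP => [Hlt _ | _ Hd'].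
  right; apply: leq_ltn_trans (size_undup_cat _ _) _; by rewrite Hq.
apply: IH => //; first by rewrite size_rcons addSnnS.
move=> i /andP [Hi1 Hi2]; rewrite cat_rcons; apply: Hok.
by rewrite Hi2 andbT; apply: ltnW; rewrite size_rcons in Hi1.
Qed.

Lemma size_undup_map_in (T1 T2 : eqType) (f : T1 -> T2) (s : seq T1) :
  {in s &, injective f} -> size (undup (map f s)) = size (undup s).
Proof.
move=> Hf.
have Hu : uniq (map f (undup s)).
  rewrite map_inj_in_uniq ?undup_uniq // => x y Hx Hy; apply: Hf;
  by rewrite -mem_undup.
rewrite -(size_map f (undup s)); apply: perm_size; apply: uniq_perm => //.
  exact: undup_uniq.
by move=> y; rewrite mem_undup (eq_mem_map f (mem_undup s)).
Qed.

Lemma bf6 (s : seq nat) : size s = 15 -> 7 <= size (undup s) ->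
  exists2 t, t \in copies & rb s (idxs t).
Proof.
move=> Hs H7.
set r := [seq index x s | x <- s].
have Hinj : {in s &, injective (index^~ s)} := @index_inj _ 0 s.
have Hr : size r = 15 by rewrite size_map.
have Hok : forall i, size ([::] : seq nat) <= i < 15 -> okv ([::] ++ r) i.
  move=> i /andP [_ Hi]; rewrite /okv /= /r (nth_map 0) ?Hs //.
  have Hm : nth 0 s i \in s by rewrite mem_nth ?Hs.
  have Hle : index (nth 0 s i) s <= i by apply: index_nth; rewrite Hs.
  rewrite (nth_map 0); last by rewrite index_mem.
  rewrite nth_index // eqxx andbT -leq_eqVlt; exact: Hle.
have := @dfs_sound 15 [::] r check_ok Hr erefl Hok; rewrite cat0s.
case=> [[t Ht Hrb] | Hlt]; last first.
  by move: Hlt; rewrite size_undup_map_in // ltnNge H7.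
exists t => //; move: Hrb; rewrite /rb.
have Hall : all (fun y => y < 15) (idxs t).
  by have /allP := copies_okP => /(_ t Ht) /andP [_ ->].
have -> : [seq nth 0 r i | i <- idxs t] =
          [seq index x s | x <- [seq nth 0 s i | i <- idxs t]].
  rewrite -map_comp; apply/eq_in_map => i Hi /=.
  by rewrite (nth_map 0) // Hs; apply: (allP Hall).
rewrite map_inj_in_uniq // => x y /mapP [i Hi ->] /mapP [j Hj ->].
by apply: Hinj; rewrite mem_nth // Hs; [apply: (allP Hall) | apply: (allP Hall)].
Qed.

Set Implicit Arguments. Unset Strict Implicit. Unset Printing Implicit Defensive.

Definition cin N (col : {set 'I_N} -> nat) (S : {set 'I_N}) : seq nat :=
  [seq col e | e <- filter (fun e : {set 'I_N} => e \subset S) (enum (Kedges N))].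

Definition rbin N (col : {set 'I_N} -> nat) (S : {set 'I_N}) : Prop :=
  exists f : 'I_6 -> 'I_N, [/\ injective f, forall i, f i \in S &
    uniq [seq col [set f e.1; f e.2] | e <- P4uP2]].

Lemma mkH N (col : {set 'I_N} -> nat) (S : {set 'I_N}) (p0 p1 p2 p3 p4 p5 : 'I_N) :
  uniq [:: p0; p1; p2; p3; p4; p5] -> all (mem S) [:: p0; p1; p2; p3; p4; p5] ->
  uniq [:: col [set p0; p1]; col [set p1; p2]; col [set p2; p3]; col [set p4; p5]] ->
  rbin col S.
Proof.
move=> Hu HS Hc.
pose l := [:: p0; p1; p2; p3; p4; p5].
exists (fun i : 'I_6 => nth p0 l i); split.
- move=> i j /eqP; rewrite nth_uniq // => /eqP; exact: val_inj.
- move=> i; apply: (allP HS); by rewrite mem_nth.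
- by rewrite /P4uP2 /= !inordK.
Qed.

Lemma edgeK N (x y : 'I_N) : x != y -> [set x; y] \in Kedges N.
Proof. by move=> H; rewrite inE cards2 H. Qed.

Lemma mem_cin N (col : {set 'I_N} -> nat) (S e : {set 'I_N}) :
  e \in Kedges N -> e \subset S -> col e \in cin col S.
Proof. by move=> He HS; apply: map_f; rewrite mem_filter HS mem_enum. Qed.

Lemma cinP N (col : {set 'I_N} -> nat) (S : {set 'I_N}) a : a \in cin col S ->
  exists x y, [/\ x \in S, y \in S, x != y & col [set x; y] = a].
Proof.
case/mapP => e; rewrite mem_filter mem_enum => /andP [HS He] ->.
move: He; rewrite inE => /cards2P [x [y [Hxy Exy]]].
exists x, y; split => //; move: HS; rewrite Exy subUset !sub1set;
by case/andP.
Qed.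

Lemma pairs_mem i j : i < 6 -> j < 6 -> i != j -> (minn i j, maxn i j) \in pairs.
Proof.
have: all (fun i => all (fun j => (i == j) || ((minn i j, maxn i j) \in pairs))
   (iota 0 6)) (iota 0 6) by [].
move=> /allP H Hi Hj Hij.
have := H i; rewrite mem_iota Hi => /(_ isT) /allP /(_ j).
by rewrite mem_iota Hj (negbTE Hij) => /(_ isT).
Qed.

Lemma set_minmax (T : finType) (v0 : T) vs i j :
  [set nth v0 vs (minn i j); nth v0 vs (maxn i j)] = [set nth v0 vs i; nth v0 vs j].
Proof.
by case: (leqP i j) => H //; rewrite setUC.
Qed.

Lemma base6 N (col : {set 'I_N} -> nat) (S : {set 'I_N}) :
  #|S| = 6 -> 7 <= size (undup (cin col S)) -> rbin col S.
Proof.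
move=> HS H7.
have Hsz : size (enum S) = 6 by rewrite -cardE.
have HuS := enum_uniq S.
have HmS : forall x, (x \in S) = (x \in enum S) by move=> x; rewrite mem_enum.
move: Hsz HuS HmS.
case: (enum S) => [|v0 [|v1 [|v2 [|v3 [|v4 [|v5 [|? ?]]]]]]] // _ Hu Hm.
set vs := [:: v0; v1; v2; v3; v4; v5] in Hu Hm.
pose s := [seq col [set nth v0 vs p.1; nth v0 vs p.2] | p <- pairs].
have Hs : size s = 15 by rewrite size_map.
have Hcol : forall a b, a < 6 -> b < 6 -> a != b ->
    nth 0 s (eidx a b) = col [set nth v0 vs a; nth v0 vs b].
  move=> a b Ha Hb Hab; have Hp := pairs_mem Ha Hb Hab.
  rewrite /s /eidx (nth_map (0, 0)) ?index_mem // nth_index //=.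
  by rewrite set_minmax.
have H7' : 7 <= size (undup s).
  apply: leq_trans H7 _; apply: uniq_leq_size; first exact: undup_uniq.
  move=> y; rewrite !mem_undup => /cinP [x [z [Hx Hz Hxz <-]]].
  rewrite Hm in Hx; rewrite Hm in Hz.
  have Hi : index x vs < 6 by rewrite -[6]/(size vs) index_mem.
  have Hj : index z vs < 6 by rewrite -[6]/(size vs) index_mem.
  have Hij : index x vs != index z vs.
    apply: contra Hxz => /eqP E; apply/eqP.
    by rewrite -(nth_index v0 Hx) -(nth_index v0 Hz) E.
  have -> : col [set x; z] = nth 0 s (eidx (index x vs) (index z vs)).
    by rewrite Hcol // !nth_index.
  apply: mem_nth; rewrite Hs.
  by rewrite -[15]/(size pairs) index_mem pairs_mem.
have [t Ht Hrb] := @bf6 s Hs H7'.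
have /allP /(_ t Ht) := copies_okP.
case/andP => [/andP [/andP [Hst Hut] Hlt] _].
move: Hst Hut Hlt Hrb.
case: t Ht => [|t0 [|t1 [|t2 [|t3 [|t4 [|t5 [|? ?]]]]]]] // _ _ Hut Hlt.
rewrite /rb /idxs /=.
move: Hlt => /and5P [H0 H1 H2 H3 /andP [H4 /andP [H5 _]]].
have Hut' := Hut.
move: Hut; rewrite /= !inE !negb_or => Hut.
case/and5P: Hut => /and5P [H01 H02 H03 H04 H05] /and4P [H12 H13 H14 H15]
  /and3P [H23 H24 H25] /andP [H34 H35] /andP [H45 _].
rewrite !Hcol // => Hrb.
have Hall : all (fun y => y < 6) [:: t0; t1; t2; t3; t4; t5].
  by rewrite /= H0 H1 H2 H3 H4 H5.
apply: (@mkH _ col S (nth v0 vs t0) (nth v0 vs t1) (nth v0 vs t2) (nth v0 vs t3)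
  (nth v0 vs t4) (nth v0 vs t5)).
- have -> : [:: nth v0 vs t0; nth v0 vs t1; nth v0 vs t2; nth v0 vs t3;
     nth v0 vs t4; nth v0 vs t5] = map (nth v0 vs) [:: t0; t1; t2; t3; t4; t5] by [].
  rewrite map_inj_in_uniq // => a b Ha Hb /eqP; rewrite nth_uniq // => [/eqP //||].
    exact: (allP Hall a Ha).
  exact: (allP Hall b Hb).
- by rewrite /= !Hm !mem_nth.
- by rewrite /= !inE !negb_or.
Qed.

Definition own N (col : {set 'I_N} -> nat) (S : {set 'I_N}) (v : 'I_N) (al : nat) : Prop :=
  forall x y, x \in S -> y \in S -> x != y -> x != v -> y != v -> col [set x; y] != al.

Record gp N (col : {set 'I_N} -> nat) (S : {set 'I_N}) (v a b : 'I_N) : Prop := GP {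
  gpv : v \in S; gpa : a \in S; gpb : b \in S; gpav : a != v; gpbv : b != v;
  gpc : col [set v; a] != col [set v; b];
  gpoa : own col S v (col [set v; a]); gpob : own col S v (col [set v; b]) }.

Lemma gp_sym N (col : {set 'I_N} -> nat) (S : {set 'I_N}) (v a b : 'I_N) : gp col S v a b -> gp col S v b a.
Proof. by case=> *; constructor => //; rewrite eq_sym. Qed.

Lemma gp_ab N (col : {set 'I_N} -> nat) (S : {set 'I_N}) (v a b : 'I_N) : gp col S v a b -> a != b.
Proof. by case=> _ _ _ _ _ Hc _ _; apply: contraNneq Hc => ->. Qed.

Definition Ov N (col : {set 'I_N} -> nat) (S : {set 'I_N}) (v : 'I_N) :=
  [seq x <- undup (cin col S) | x \notin cin col (S :\ v)].

Lemma Ov_count N (col : {set 'I_N} -> nat) (S : {set 'I_N}) (v : 'I_N) :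
  size (undup (cin col S)) <= size (undup (cin col (S :\ v))) + size (Ov col S v).
Proof.
rewrite -(count_predC (mem (cin col (S :\ v))) (undup (cin col S))) /Ov size_filter.
apply: leq_add; last exact: leqnn.
rewrite -size_filter; apply: uniq_leq_size; first by rewrite filter_uniq ?undup_uniq.
move=> x; rewrite mem_filter => /andP [H _]; by rewrite mem_undup.
Qed.

Lemma Ov_elem N (col : {set 'I_N} -> nat) (S : {set 'I_N}) (v : 'I_N) al : v \in S -> al \in Ov col S v ->
  exists a, [/\ a \in S, a != v, col [set v; a] = al & own col S v al].
Proof.
move=> Hv; rewrite mem_filter mem_undup => /andP [Hn Hin].
have Hown : own col S v al.
  move=> x y Hx Hy Hxy Hxv Hyv; apply: contraNneq Hn => <-.
  apply: mem_cin; first exact: edgeK.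
  by rewrite subUset !sub1set !in_setD1 Hx Hy Hxv Hyv.
have [x [y [Hx Hy Hxy Hc]]] := cinP Hin.
case: (eqVneq x v) => [Exv | Hxv].
  by exists y; split => //; [rewrite eq_sym -Exv | rewrite -Exv].
case: (eqVneq y v) => [Eyv | Hyv].
  by exists x; split => //; rewrite -Eyv setUC.
by have := Hown x y Hx Hy Hxy Hxv Hyv; rewrite Hc eqxx.
Qed.

Lemma Ov_gp N (col : {set 'I_N} -> nat) (S : {set 'I_N}) (v : 'I_N) : v \in S -> 1 < size (Ov col S v) ->
  exists a b, gp col S v a b.
Proof.
move=> Hv H2.
have Hu : uniq (Ov col S v) by rewrite filter_uniq ?undup_uniq.
have [a [Ha Hav Hca Hoa]] := Ov_elem Hv (mem_nth 0 (ltnW H2)).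
have [b [Hb Hbv Hcb Hob]] := Ov_elem Hv (mem_nth 0 H2).
exists a, b; constructor => //; rewrite ?Hca ?Hcb //.
by rewrite nth_uniq // ltnW.
Qed.

Lemma avoid N (S : {set 'I_N}) (l : seq 'I_N) : size l < #|S| -> exists2 x, x \in S & x \notin l.
Proof.
move=> Hl; have: ~~ (S \subset l).
  apply/negP => Hs; have := subset_leq_card Hs; rewrite leqNgt.
  by rewrite (leq_ltn_trans (card_size l) Hl).
by case/subsetPn => x Hx Hxn; exists x.
Qed.

Lemma rbin_sub N (col : {set 'I_N} -> nat) (S S' : {set 'I_N}) : S' \subset S -> rbin col S' -> rbin col S.
Proof.
move=> Hs [f [Hf Hm Hu]]; exists f; split => // i; exact: (subsetP Hs).
Qed.

Lemma uniq4 (c1 c2 c3 c4 : nat) : c1 != c2 -> c1 != c3 -> c1 != c4 -> c2 != c3 ->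
  c2 != c4 -> c3 != c4 -> uniq [:: c1; c2; c3; c4].
Proof. by move=> *; rewrite /= !inE !negb_or; repeat (apply/andP; split). Qed.

Lemma uniq6 (T : eqType) (p0 p1 p2 p3 p4 p5 : T) :
  p0 != p1 -> p0 != p2 -> p0 != p3 -> p0 != p4 -> p0 != p5 ->
  p1 != p2 -> p1 != p3 -> p1 != p4 -> p1 != p5 ->
  p2 != p3 -> p2 != p4 -> p2 != p5 -> p3 != p4 -> p3 != p5 -> p4 != p5 ->
  uniq [:: p0; p1; p2; p3; p4; p5].
Proof. by move=> *; rewrite /= !inE !negb_or; repeat (apply/andP; split). Qed.

Lemma memNeq (T : eqType) (l : seq T) x y : x \in l -> y \notin l -> x != y.
Proof. by move=> Hx; apply: contra => /eqP <-. Qed.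

Lemma allgood N (col : {set 'I_N} -> nat) (S : {set 'I_N}) : 6 <= #|S| ->
  (forall v, v \in S -> exists a b, gp col S v a b) -> rbin col S.
Proof.
move=> H6 Hall.
case: (classic (rbin col S)) => // Hno.
have key : forall u a b y z z', gp col S u a b -> y \in S -> y \notin [:: u; a; b] ->
    gp col S y z z' -> z \in [:: u; a; b].
  move=> u a b y z z' Hu Hy Hyn Hz; apply/negPn/negP => Hzn; apply: Hno.
  have [x Hx Hxn] := @avoid N S [:: u; a; b; y; z] (leq_trans (isT : 5 < 6) H6).
  move: Hyn Hzn Hxn; rewrite !inE !negb_or.
  case/and3P => Hyu Hya Hyb; case/and3P => Hzu Hza Hzb.
  case/and5P => Hxu Hxa Hxb Hxy Hxz.
  have Hau := gpav Hu; have Hbu := gpbv Hu; have Hab := gp_ab Hu.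
  have Hzy := gpav Hz.
  apply: (@mkH _ col S a u b x y z).
  - apply: uniq6 => //; rewrite 1?eq_sym //.
  - by rewrite /= (gpa Hu) (gpv Hu) (gpb Hu) Hx Hy (gpa Hz).
  - apply: uniq4.
    + by rewrite setUC; exact: gpc Hu.
    + by rewrite setUC eq_sym; apply: (gpoa Hu); rewrite ?(gpb Hu) // eq_sym.
    + by rewrite setUC eq_sym; apply: (gpoa Hu); rewrite ?(gpa Hz) // eq_sym.
    + by rewrite eq_sym; apply: (gpob Hu); rewrite ?(gpb Hu) // eq_sym.
    + by rewrite eq_sym; apply: (gpob Hu); rewrite ?(gpa Hz) // eq_sym.
    + by apply: (gpoa Hz); rewrite ?(gpb Hu) // eq_sym.
have [u0 Hu0 _] := @avoid N S [::] (leq_trans (isT : 0 < 6) H6).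
have [a [b Hab]] := Hall u0 Hu0.
have [w Hw Hwn] := @avoid N S [:: u0; a; b] (leq_trans (isT : 3 < 6) H6).
have [w2 Hw2 Hw2n] := @avoid N S [:: u0; a; b; w] (leq_trans (isT : 4 < 6) H6).
have [w3 Hw3 Hw3n] := @avoid N S [:: u0; a; b; w; w2] (leq_trans (isT : 5 < 6) H6).
have [a1 [b1 H1]] := Hall w Hw.
have [a2 [b2 H2]] := Hall w2 Hw2.
have Hw2T : w2 \notin [:: u0; a; b].
  by move: Hw2n; rewrite !inE !negb_or => /and4P [-> -> -> _].
have Hw3T : w3 \notin [:: u0; a; b].
  by move: Hw3n; rewrite !inE !negb_or => /and5P [-> -> -> _ _].
have Ka1 := key _ _ _ _ _ _ Hab Hw Hwn H1.
have Kb1 := key _ _ _ _ _ _ Hab Hw Hwn (gp_sym H1).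
have Ka2 := key _ _ _ _ _ _ Hab Hw2 Hw2T H2.
have Kb2 := key _ _ _ _ _ _ Hab Hw2 Hw2T (gp_sym H2).
have Hw2w : w2 != w by move: Hw2n; rewrite !inE !negb_or => /and4P [_ _ _ ->].
have Ka2' : a2 \in [:: w; a1; b1].
  apply: (key _ _ _ _ _ _ H1 Hw2 _ H2).
  rewrite !inE !negb_or Hw2w /= eq_sym (memNeq Ka1 Hw2T) /= eq_sym (memNeq Kb1 Hw2T) //.
have Hown1 : own col S w (col [set w; a2]).
  move: Ka2'; rewrite !inE => /or3P [/eqP E | /eqP -> | /eqP ->].
  - by move: (memNeq Ka2 Hwn); rewrite E eqxx.
  - exact: gpoa H1.
  - exact: gpob H1.
have Hu3 : uniq [:: u0; a; b].
  rewrite /= !inE !negb_or eq_sym (gpav Hab) eq_sym (gpbv Hab) /=.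
  by rewrite (gp_ab Hab).
have [t Ht Htn] : exists2 t, t \in [:: u0; a; b] & t \notin [:: a2; b2].
  apply/allPn; apply/negP => /allP Hsub.
  by have := uniq_leq_size Hu3 Hsub.
have Hw3w : w3 != w by move: Hw3n; rewrite !inE !negb_or => /and5P [_ _ _ -> _].
have Hw3w2 : w3 != w2 by move: Hw3n; rewrite !inE !negb_or => /and5P [_ _ _ _ ->].
move: Htn; rewrite !inE negb_or => /andP [Hta2 Htb2].
have Hab2 := gp_ab H2.
have HtS : t \in S.
  by move: Ht; rewrite !inE => /or3P [] /eqP ->; [| exact: gpa Hab | exact: gpb Hab].
have Ha2w := memNeq Ka2 Hwn; have Hb2w := memNeq Kb2 Hwn; have Htw := memNeq Ht Hwn.
have Ha2w2 := memNeq Ka2 Hw2T; have Hb2w2 := memNeq Kb2 Hw2T; have Htw2 := memNeq Ht Hw2T.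
have Ha2w3 := memNeq Ka2 Hw3T; have Hb2w3 := memNeq Kb2 Hw3T; have Htw3 := memNeq Ht Hw3T.
have Ha2S := gpa H2; have Hb2S := gpb H2.
apply: (@mkH _ col S w a2 w2 b2 w3 t).
- by apply: uniq6; rewrite // eq_sym.
- by rewrite /= Hw Ha2S Hw2 Hb2S Hw3 HtS.
- apply: uniq4.
  + by rewrite eq_sym; apply: Hown1; rewrite // eq_sym.
  + by rewrite eq_sym; apply: Hown1; rewrite // eq_sym.
  + by rewrite eq_sym; apply: Hown1; rewrite // eq_sym.
  + by rewrite setUC; exact: gpc H2.
  + by rewrite setUC eq_sym; apply: (gpoa H2); rewrite // eq_sym.
  + by rewrite eq_sym; apply: (gpob H2); rewrite // eq_sym.
Qed.

Lemma main_gen m : forall N (col : {set 'I_N} -> nat) (S : {set 'I_N}),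
  #|S| = m + 6 -> m + 7 <= size (undup (cin col S)) -> rbin col S.
Proof.
elim: m => [|m IH] N col S HS Hc; first exact: base6.
case: (boolP [exists v in S, size (Ov col S v) <= 1]).
  case/exists_inP => v Hv Hle.
  apply: (@rbin_sub _ _ _ (S :\ v)); first exact: subD1set.
  apply: IH.
    by move: HS; rewrite (cardsD1 v S) Hv add1n addSn => [[]].
  have := leq_trans Hc (Ov_count col S v).
  rewrite addSn => H; rewrite -(leq_add2r 1) addn1; apply: leq_trans H _.
  by rewrite leq_add2l.
move=> Hn; apply: allgood; first by rewrite HS leq_addl.
move=> v Hv; apply: Ov_gp => //; rewrite ltnNge; apply: contra Hn => H.
by apply/exists_inP; exists v.
Qed.

Lemma upper n : 6 <= n -> forces_rainbow n P4uP2 n.+1.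
Proof.
move=> Hn col Hc.
have HS : #|[set: 'I_n]| = (n - 6) + 6 by rewrite cardsT card_ord subnK.
have Hcin : cin col [set: 'I_n] = [seq col e | e <- enum (Kedges n)].
  by rewrite /cin; congr map; apply/all_filterP/allP => e _; exact: subsetT.
have Hc' : (n - 6) + 7 <= size (undup (cin col [set: 'I_n])).
  by rewrite Hcin -[7]/(6.+1) addnS subnK.
have [f [Hf _ Hu]] := @main_gen (n - 6) n col [set: 'I_n] HS Hc'.
by exists f.
Qed.

Definition zz (n : nat) (Hn : 6 <= n) : 'I_n := Ordinal (leq_trans (isT : 0 < 6) Hn).
Definition scol (n : nat) (Hn : 6 <= n) (e : {set 'I_n}) : nat :=
  if zz Hn \in e then \sum_(i in e) (val i) else 0.

Lemma scol0 n (Hn : 6 <= n) (x y : 'I_n) : x != zz Hn -> y != zz Hn -> scol Hn [set x; y] = 0.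
Proof. by move=> Hx Hy; rewrite /scol !inE !(eq_sym (zz Hn)) (negbTE Hx) (negbTE Hy). Qed.

Lemma scolz n (Hn : 6 <= n) (x : 'I_n) : x != zz Hn -> scol Hn [set zz Hn; x] = val x.
Proof.
move=> Hx; rewrite /scol !inE eqxx /= big_setU1 /=; last by rewrite inE eq_sym.
by rewrite big_set1.
Qed.

Lemma star_ncolors n (Hn : 6 <= n) : n <= ncolors (scol Hn).
Proof.
suff H : size (iota 0 n) <= ncolors (scol Hn) by rewrite size_iota in H.
rewrite /ncolors; apply: uniq_leq_size; first exact: iota_uniq.
move=> j; rewrite mem_iota add0n => Hj; rewrite mem_undup.
case: j Hj => [|j] Hj.
  pose x1 : 'I_n := Ordinal (leq_trans (isT : 1 < 6) Hn).
  pose x2 : 'I_n := Ordinal (leq_trans (isT : 2 < 6) Hn).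
  have <- : scol Hn [set x1; x2] = 0 by rewrite scol0.
  by apply: map_f; rewrite mem_enum; apply: edgeK.
have <- : scol Hn [set zz Hn; Ordinal Hj] = j.+1 by rewrite scolz.
by apply: map_f; rewrite mem_enum; apply: edgeK.
Qed.

Lemma star_norb n (Hn : 6 <= n) : ~ rainbow_copy P4uP2 (scol Hn).
Proof.
case=> f [Hf Hu].
have [j0 Hj0] : exists j0 : 'I_6, forall i, i != j0 -> f i != zz Hn.
  case: (pickP (fun i => f i == zz Hn)) => [j /eqP Hj | Hno].
    exists j => i; apply: contra => /eqP Hi; apply/eqP; apply: Hf; by rewrite Hi Hj.
  by exists ord0 => i _; rewrite Hno.
have Z : forall a b : nat, a < 6 -> b < 6 -> a != val j0 -> b != val j0 ->
    scol Hn [set f (inord a); f (inord b)] = 0.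
  move=> a b Ha Hb Haj Hbj; apply: scol0; apply: Hj0.
    by apply: contra Haj => /eqP <-; rewrite /= inordK.
  by apply: contra Hbj => /eqP <-; rewrite /= inordK.
have Hu' : uniq [:: scol Hn [set f (inord 0); f (inord 1)]; scol Hn [set f (inord 1); f (inord 2)];
   scol Hn [set f (inord 2); f (inord 3)]; scol Hn [set f (inord 4); f (inord 5)]] := Hu.
case: j0 Hj0 Z => [[|[|[|[|[|[|//]]]]]] ?] _ Z /= in Hu'.
- by move: Hu'; rewrite (Z 2 3) // (Z 4 5) //= !inE ?eqxx ?orbT ?andbF.
- by move: Hu'; rewrite (Z 2 3) // (Z 4 5) //= !inE ?eqxx ?orbT ?andbF.
- by move: Hu'; rewrite (Z 0 1) // (Z 4 5) //= !inE ?eqxx ?orbT ?andbF.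
- by move: Hu'; rewrite (Z 0 1) // (Z 4 5) //= !inE ?eqxx ?orbT ?andbF.
- by move: Hu'; rewrite (Z 0 1) // (Z 2 3) //= !inE ?eqxx ?orbT ?andbF.
- by move: Hu'; rewrite (Z 0 1) // (Z 2 3) //= !inE ?eqxx ?orbT ?andbF.
Qed.


Theorem proposition6p3 (n : nat) : 6 <= n -> AR_is n P4uP2 n.+1.
Proof.
move=> Hn; split; first exact: upper.
move=> k Hk Hf.
have Hk' : k <= n by rewrite -ltnS.
have := Hf (scol Hn) (leq_trans Hk' (star_ncolors Hn)).
exact: star_norb.
Qed.
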